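(* Let $d,n$ be positive integers with $d\leq n^2/4$. Then $$p_d(n)<4e^{cn}n^{n+2\sqrt{d}}\max\{2^{-n},(2n)^{-\sqrt{d}}\}\qquad\text{with } c=\frac{3}{2e}+1.$$ Consequently, if $d=d(n)$ satisfies $dn^{-2}\to 0$ as $n\to\infty$, then $p_d(n)\leq n^{n+o(n)}$.
   Context: $\mathbb{Z}_+=\{0,1,2,\dots\}$. A set $S\subset\mathbb{Z}_+^d$ is a lower set if whenever $\mathbf{x}\in S$ and $\mathbf{x}'\in\mathbb{Z}_+^d$ satisfies $x'_i\leq x_i$ for all $i$, then $\mathbf{x}'\in S$. $p_d(n)$ denotes the number of lower sets in $\mathbb{Z}_+^d$ with exactly $n$ points. *)

(* Defs.v *)
From mathcomp Require Import all_boot all_order.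
From mathcomp Require Import finmap.
From Stdlib Require Import ClassicalEpsilon.
Set Implicit Arguments. Unset Strict Implicit. Unset Printing Implicit Defensive.
Local Open Scope fset_scope.

Definition point (d : nat) := {ffun 'I_d -> nat}.

Definition lower_set (d : nat) (S : {fset point d}) : Prop :=
  forall x : point d, x \in S ->
  forall y : point d, (forall i, y i <= x i) -> y \in S.

(* "N is the number of lower sets in Z_+^d with exactly n points":
   there is a duplicate-free list enumerating exactly these sets, of length N.
   (A lower set with n points is automatically finite, so it is an fset.) *)
Definition counts_lower_sets (d n N : nat) : Prop :=
  exists s : seq {fset point d},
    [/\ uniq s, size s = N &
        forall S : {fset point d}, S \in s <-> (lower_set S /\ #|` S| = n)].

Definition p (d n : nat) : nat :=
  epsilon (inhabits 0%N) (counts_lower_sets d n).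

(* Main.v *)
Require Import Defs.
From mathcomp Require Import all_boot all_order all_algebra.
From mathcomp Require Import all_classical all_reals all_analysis.
From mathcomp Require Import finmap ring lra zify.
Set Implicit Arguments. Unset Strict Implicit. Unset Printing Implicit Defensive.
Import Order.TTheory GRing.Theory Num.Theory.
Import numFieldNormedType.Exports.
Section Comb.
Local Open Scope fset_scope.
Local Open Scope nat_scope.
Variable d : nat.
Local Notation P := (Defs.point d).

Definition z0 : P := [ffun _ => 0].
Definition ev (l : 'I_d) : P := [ffun j => nat_of_bool (j == l)].
Definition dec (y : P) (l : 'I_d) : P := [ffun j => y j - nat_of_bool (j == l)].
Definition sP (y : P) := \sum_i y i.
Definition pk (x : P) := choice.pickle x.
Definition ltp (x y : P) := (sP x < sP y) || ((sP x == sP y) && (pk x < pk y)).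

Lemma pk_inj : injective pk.
Proof. exact: pcan_inj choice.pickleK. Qed.

Lemma ltp_irr x : ltp x x = false.
Proof. by rewrite /ltp ltnn eqxx ltnn. Qed.

Lemma ltp_trans y x z : ltp x y -> ltp y z -> ltp x z.
Proof.
rewrite /ltp => /orP[h1|/andP[/eqP e1 h1]] /orP[h2|/andP[/eqP e2 h2]].
- by rewrite (ltn_trans h1 h2).
- by rewrite -e2 h1.
- by rewrite e1 h2.
- by rewrite e1 e2 eqxx (ltn_trans h1 h2) orbT.
Qed.

Lemma ltp_total x y : x != y -> ltp x y || ltp y x.
Proof.
move=> nxy; rewrite /ltp.
case: (ltngtP (sP x) (sP y)) => //= e.
case: (ltngtP (pk x) (pk y)) => //= /pk_inj exy.
by rewrite exy eqxx in nxy.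
Qed.

Lemma dec_le (y : P) l j : dec y l j <= y j.
Proof. by rewrite ffunE leq_subr. Qed.

Lemma ev_le (y : P) l : 0 < y l -> forall j, ev l j <= y j.
Proof. move=> h j; rewrite ffunE; case: eqP => [->|] //=. Qed.

Lemma dec_ev_inj (y1 y2 : P) l : 0 < y1 l -> 0 < y2 l -> dec y1 l = dec y2 l -> y1 = y2.
Proof.
move=> h1 h2 e; apply/ffunP => j; have := congr1 (fun f : P => f j) e.
rewrite !ffunE; case: eqP => [->|_]; last by rewrite !subn0.
by move=> e'; rewrite -(subnK h1) -(subnK h2) e'.
Qed.

Lemma sP_dec (y : P) l : 0 < y l -> sP y = (sP (dec y l)).+1.
Proof.
move=> h; rewrite /sP (bigD1 l) //= [in RHS](bigD1 l) //= ffunE eqxx.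
rewrite -addSn subn1 prednK //; congr (_ + _); apply: eq_bigr => j /negbTE nj.
by rewrite ffunE nj subn0.
Qed.

Lemma sP_eq0 (y : P) : sP y = 0 -> y = z0.
Proof.
move=> /eqP; rewrite /sP sum_nat_eq0 => /forallP h.
by apply/ffunP => j; rewrite ffunE; apply/eqP; have := h j.
Qed.

Lemma dec_ev_l l : dec (ev l) l = z0.
Proof. by apply/ffunP => j; rewrite !ffunE subnn. Qed.

Lemma ev_pos l : 0 < ev l l.
Proof. by rewrite ffunE eqxx. Qed.

Lemma ev_inj : injective ev.
Proof.
move=> l l' e; have := congr1 (fun f : P => f l) e; rewrite !ffunE eqxx.
by case: eqP.
Qed.

Lemma lt_dec (y : P) l : 0 < y l -> ltp (dec y l) y.
Proof. by move=> h; rewrite /ltp (sP_dec h) ltnSn. Qed.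

Lemma lt_ev (y : P) l : 0 < y l -> dec y l != z0 -> ltp (ev l) y.
Proof.
move=> h nz; rewrite /ltp (sP_dec h) (sP_dec (ev_pos l)) dec_ev_l.
have : sP z0 = 0 by rewrite /sP big1 // => i _; rewrite ffunE.
move=> ->; rewrite ltnS lt0n; apply/orP; left; apply/negP => /eqP /sP_eq0.
by move/eqP: nz.
Qed.

Lemma pick_nz (y : P) : y != z0 -> exists l, [pick i | 0 < y i] = Some l /\ 0 < y l.
Proof.
case: pickP => [l hl|h] nz; first by exists l.
case/negP: nz; apply/eqP/ffunP => j; rewrite ffunE; have := h j.
by rewrite lt0n => /negbFE/eqP.
Qed.


Definition rk (S : {fset P}) (x : P) := count (ltp^~ x) (enum_fset S).

Lemma rk_lt (S : {fset P}) x : x \in S -> rk S x < #|`S|.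
Proof.
move=> xS; rewrite /rk -(count_predC (ltp^~ x)) -addn1 leq_add2l.
by rewrite -has_count; apply/hasP; exists x => //=; rewrite ltp_irr.
Qed.

Lemma rk_inj (S : {fset P}) x y : x \in S -> y \in S -> rk S x = rk S y -> x = y.
Proof.
have key : forall x y, x \in S -> y \in S -> ltp x y -> rk S x < rk S y.
  move=> a b aS bS ab; rewrite /rk -!size_filter.
  have := @uniq_leq_size _ (a :: seq.filter (ltp^~ a) (enum_fset S))
                         (seq.filter (ltp^~ b) (enum_fset S)).
  apply.
    by rewrite /= filter_uniq ?fset_uniq // andbT mem_filter ltp_irr.
  move=> z; rewrite inE !mem_filter => /orP[/eqP->|/andP[za ->]].
    by rewrite ab aS.
  by rewrite (ltp_trans za ab).
move=> xS yS e; apply/eqP; apply/negP => /negP nxy.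
case/orP: (ltp_total nxy) => h.
  by have := key _ _ xS yS h; rewrite e ltnn.
by have := key _ _ yS xS h; rewrite e ltnn.
Qed.

Lemma rk_eq (S S' : {fset P}) x :
  (forall w, ltp w x -> (w \in S) = (w \in S')) -> rk S x = rk S' x.
Proof.
move=> h; rewrite /rk -!size_filter; apply: perm_size.
apply: uniq_perm; rewrite ?filter_uniq ?fset_uniq //.
move=> z; rewrite !mem_filter; case e: (ltp z x) => //=.
exact: h.
Qed.

Lemma lower_dec (S : {fset P}) y l : lower_set S -> y \in S -> dec y l \in S.
Proof. by move=> lS yS; apply: (lS y yS) => j; apply: dec_le. Qed.

Lemma lower_ev (S : {fset P}) y l : lower_set S -> y \in S -> 0 < y l -> ev l \in S.
Proof. by move=> lS yS h; apply: (lS y yS) => j; apply: ev_le. Qed.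

Lemma lower_z0 (S : {fset P}) : lower_set S -> 0 < #|`S| -> z0 \in S.
Proof.
move=> lS; case e: (enum_fset S) => [|y s] //= _.
have yS : y \in S by rewrite -[y \in S]/(y \in enum_fset S) e inE eqxx.
by apply: (lS y yS) => j; rewrite ffunE.
Qed.

Variable n' : nat.
Local Notation T := ('I_d + 'I_n'.+1 * 'I_n'.+1)%type.

Definition code (S : {fset P}) (y : P) : T :=
  match [pick i | 0 < y i] with
  | Some l => if dec y l == z0 then inl l
              else inr (inord (rk S (dec y l)), inord (rk S (ev l)))
  | None => inr (ord0, ord0)
  end.

Definition codes (S : {fset P}) : {set T} :=
  [set t in [seq code S y | y <- enum_fset S & y != z0]].

Lemma inord_inj_lt a b : a <= n' -> b <= n' -> (inord a : 'I_n'.+1) = inord b -> a = b.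
Proof.
move=> ha hb e; have := congr1 (@nat_of_ord _) e.
by rewrite !inordK.
Qed.

Lemma code_inj (S : {fset P}) y1 y2 : lower_set S -> #|`S| = n'.+1 ->
  y1 \in S -> y2 \in S -> y1 != z0 -> y2 != z0 -> code S y1 = code S y2 -> y1 = y2.
Proof.
move=> lS cS y1S y2S nz1 nz2.
have [l1 [p1 h1]] := pick_nz nz1; have [l2 [p2 h2]] := pick_nz nz2.
rewrite /code p1 p2.
have rkb : forall x, x \in S -> rk S x <= n' by move=> x xS; have := rk_lt xS; rewrite cS.
case: eqP => e1; case: eqP => e2 //.
- by case=> e; subst l2; apply: (dec_ev_inj h1 h2); rewrite e1 e2.
- case=> /inord_inj_lt ea /inord_inj_lt eb.
  have ed := rk_inj (lower_dec l1 lS y1S) (lower_dec l2 lS y2S)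
    (ea (rkb _ (lower_dec l1 lS y1S)) (rkb _ (lower_dec l2 lS y2S))).
  have el := ev_inj (rk_inj (lower_ev lS y1S h1) (lower_ev lS y2S h2)
    (eb (rkb _ (lower_ev lS y1S h1)) (rkb _ (lower_ev lS y2S h2)))).
  subst l2; exact: dec_ev_inj h1 h2 ed.
Qed.

Lemma card_codes (S : {fset P}) : lower_set S -> #|`S| = n'.+1 -> #|codes S| = n'.
Proof.
move=> lS cS; rewrite /codes cardsE.
have U : uniq [seq code S y | y <- enum_fset S & y != z0].
  rewrite map_inj_in_uniq ?filter_uniq ?fset_uniq //.
  move=> a b; rewrite !mem_filter => /andP[na aS] /andP[nb bS].
  exact: code_inj.
move/card_uniqP: U => ->.
rewrite size_map size_filter.
have := count_predC (pred1 z0) (enum_fset S).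
rewrite count_uniq_mem ?fset_uniq // -[z0 \in enum_fset S]/(z0 \in S).
rewrite lower_z0 ?cS // => /= e.
have -> : count (fun y => y != z0) (enum_fset S) = count (predC (pred1 z0)) (enum_fset S) by [].
by move: e; rewrite add1n => -[].
Qed.

Lemma step (S S' : {fset P}) z : lower_set S -> lower_set S' ->
  #|`S| = n'.+1 -> #|`S'| = n'.+1 -> codes S = codes S' ->
  (forall w, ltp w z -> (w \in S) = (w \in S')) -> z \in S -> z \in S'.
Proof.
move=> lS lS' cS cS' eC hw zS.
have [->|nz] := eqVneq z z0; first by apply: lower_z0; rewrite ?cS'.
have : code S z \in codes S by rewrite /codes inE; apply: map_f; rewrite mem_filter nz.
rewrite eC /codes inE => /mapP[y']; rewrite mem_filter => /andP[ny' y'S'] ec.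
have [l [pz hz]] := pick_nz nz; have [l' [py hy]] := pick_nz ny'.
have rkb : forall x, x \in S' -> rk S' x <= n' by move=> x xS; have := rk_lt xS; rewrite cS'.
have rkbS : forall x, x \in S -> rk S x <= n' by move=> x xS; have := rk_lt xS; rewrite cS.
move: ec; rewrite /code pz py.
case: eqP => ez; case: eqP => ey //.
- by case=> e; subst l'; rewrite (dec_ev_inj hz hy (etrans ez (esym ey))).
- case=> /inord_inj_lt ea /inord_inj_lt eb.
  have dS := lower_dec l lS zS; have ltd := lt_dec hz.
  have dS' : dec z l \in S' by rewrite -hw.
  have agd : forall w, ltp w (dec z l) -> (w \in S) = (w \in S').
    by move=> w hw'; apply: hw; apply: ltp_trans hw' ltd.
  have eS := rk_eq agd.
  have evS := lower_ev lS zS hz.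
  have ltv : ltp (ev l) z by apply: lt_ev => //; apply/eqP.
  have evS' : ev l \in S' by rewrite -hw.
  have agv : forall w, ltp w (ev l) -> (w \in S) = (w \in S').
    by move=> w hw'; apply: hw; apply: ltp_trans hw' ltv.
  have eV := rk_eq agv.
  have y1 := lower_dec l' lS' y'S'.
  have y2 := lower_ev lS' y'S' hy.
  have e1 : dec y' l' = dec z l.
    have r : rk S' (dec y' l') = rk S' (dec z l).
      by rewrite -eS; apply: esym; apply: ea; [exact: rkbS dS | exact: rkb y1].
    exact: (rk_inj y1 dS' r).
  have e2 : ev l' = ev l.
    have r : rk S' (ev l') = rk S' (ev l).
      by rewrite -eV; apply: esym; apply: eb; [exact: rkbS evS | exact: rkb y2].
    exact: (rk_inj y2 evS' r).
  have el := ev_inj e2; subst l'.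
  by rewrite -(dec_ev_inj hy hz e1).
Qed.

Lemma codes_inj (S S' : {fset P}) : lower_set S -> lower_set S' ->
  #|`S| = n'.+1 -> #|`S'| = n'.+1 -> codes S = codes S' -> S = S'.
Proof.
move=> lS lS' cS cS' eC.
suff H : forall s z, sP z = s -> (z \in S) = (z \in S').
  by apply/fsetP => z; apply: (H (sP z)).
elim/ltn_ind => s IHs.
suff H : forall q z, sP z = s -> pk z = q -> (z \in S) = (z \in S').
  by move=> z ez; apply: (H (pk z)).
elim/ltn_ind => q IHq z ez eq.
have hw : forall w, ltp w z -> (w \in S) = (w \in S').
  move=> w; rewrite /ltp => /orP[h|/andP[/eqP e h]].
    by apply: (IHs (sP w)) => //; rewrite -ez.
  by apply: (IHq (pk w)) => //; [rewrite -eq | rewrite e].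
apply/idP/idP.
  exact: step lS lS' cS cS' eC hw.
apply: step lS' lS cS' cS (esym eC) _.
by move=> w h; rewrite hw.
Qed.

End Comb.

Lemma pmap_uniq_in (T1 T2 : eqType) (f : T1 -> option T2) (s : seq T1) :
  uniq s -> (forall a b x, f a = Some x -> f b = Some x -> a = b) -> uniq (pmap f s).
Proof.
move=> us hf; elim: s us => //= a s IH /andP[na us].
case e: (f a) => [x|] /=; last exact: IH.
rewrite IH // andbT mem_pmap; apply/negP => /mapP[b bs eb].
by move: na; rewrite (hf a b x e (esym eb)) bs.
Qed.

Lemma p_le (d n' : nat) : (p d n'.+1 <= 'C(d + n'.+1 * n'.+1, n'))%N.
Proof.
set T := ('I_d + 'I_n'.+1 * 'I_n'.+1)%type.
pose D := [set A : {set T} | #|A| == n'].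
pose Q (A : {set T}) := exists S : {fset Defs.point d},
  [/\ lower_set S, #|`S|%fset = n'.+1 & codes n' S = A].
pose ch (A : {set T}) : option {fset Defs.point d} :=
  match pselect (Q A) with
  | left h => Some (proj1_sig (cid h))
  | right _ => None
  end.
have chP : forall A S, ch A = Some S ->
    [/\ lower_set S, #|`S|%fset = n'.+1 & codes n' S = A].
  move=> A S; rewrite /ch; case: pselect => // h [<-].
  exact: (proj2_sig (cid h)).
pose s := pmap ch (enum D).
have us : uniq s.
  apply: pmap_uniq_in; first exact: enum_uniq.
  by move=> a b x /chP[_ _ <-] /chP[_ _ <-].
have ms : forall S, S \in s <-> (lower_set S /\ #|`S|%fset = n'.+1).
  move=> S; split.
    by rewrite mem_pmap => /mapP[A _ /esym/chP[]].
  case=> lS cS; rewrite mem_pmap; apply/mapP; exists (codes n' S).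
    by rewrite mem_enum inE card_codes.
  rewrite /ch; case: pselect => h; last by case: h; exists S.
  case: (cid h) => S' [lS' cS' eC] /=; congr Some.
  by apply: esym; apply: (codes_inj lS' lS cS' cS eC).
have hc : counts_lower_sets d n'.+1 (size s) by exists s.
have := ClassicalEpsilon.epsilon_spec (inhabits 0%N) (counts_lower_sets d n'.+1)
   (ex_intro _ _ hc).
rewrite -/(p d n'.+1) => -[s' [us' <- ms']].
apply: (leq_trans (uniq_leq_size us' (s2 := s) _)).
  by move=> S /ms' /ms.
rewrite size_pmap (leq_trans (count_size _ _)) // -cardE /D card_draws.
by rewrite card_sum card_prod !card_ord.
Qed.
Lemma ffact_le_pow a k : (a ^_ k <= a ^ k)%N.
Proof.
elim: k a => [|k IH] a; first by rewrite ffactn0 expn0.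
rewrite ffactnS expnS leq_mul //; apply: leq_trans (IH _) _.
case: k {IH} => [|k]; first by rewrite !expn0.
by rewrite leq_exp2r // leq_pred.
Qed.

Local Open Scope ring_scope.

Lemma fact_bound (R : realType) k : ((k.+1)%:R ^+ k : R) <= expR 1 ^+ k * (k`!)%:R.
Proof.
elim: k => [|k IH]; first by rewrite !expr0 mul1r fact0.
set m : R := (k.+1)%:R.
have m0 : 0 < m by rewrite ltr0n.
have e1 : (k.+2)%:R = m * (1 + m^-1) by rewrite mulrDr mulr1 mulfV ?gt_eqF // -natr1.
have e2 : (1 + m^-1) ^+ k.+1 <= expR 1.
  have -> : expR 1 = expR (m^-1) ^+ k.+1 :> R by rewrite -expRM_natl -/m mulfV ?gt_eqF.
  apply: lerXn2r; rewrite ?nnegrE ?expR_ge0 //; first by rewrite addr_ge0 // invr_ge0 ltW.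
  exact: expR_ge1Dx.
rewrite e1 exprMn factS natrM -/m.
apply: (le_trans (y := m ^+ k.+1 * expR 1)).
  by apply: ler_wpM2l => //; rewrite exprn_ge0 // ltW.
have -> : m ^+ k.+1 * expR 1 = expR 1 * m * m ^+ k by rewrite exprS; ring.
have -> : expR 1 ^+ k.+1 * (m * (k`!)%:R) = expR 1 * m * (expR 1 ^+ k * (k`!)%:R).
  by rewrite exprS; ring.
by apply: ler_wpM2l => //; rewrite mulr_ge0 ?expR_ge0 ?ltW.
Qed.

Lemma binom_real (R : realType) d k : (4 * d <= k.+1 * k.+1)%N ->
  ('C(d + k.+1 * k.+1, k))%:R <= (5 * expR 1 / 4) ^+ k * (k.+1)%:R ^+ k :> R.
Proof.
move=> hd; set n := k.+1; set a := (d + n * n)%N.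
have h1 : ('C(a, k))%:R * (k`!)%:R <= a%:R ^+ k :> R.
  by rewrite -natrM -natrX ler_nat bin_ffact ffact_le_pow.
have n0 : (0 : R) <= n%:R by [].
have ha : a%:R <= 5 / 4 * n%:R ^+ 2 :> R.
  have : (4 * a <= 5 * (n * n))%N by rewrite /a mulnDr; lia.
  rewrite -(ler_nat R) !natrM /a => h.
  have e : 5 / 4 * n%:R ^+ 2 = (5%:R * (n%:R * n%:R)) / 4 :> R by rewrite expr2; field.
  rewrite e ler_pdivlMr //; by rewrite mulrC.
have h2 : a%:R ^+ k <= (5 / 4 * n%:R ^+ 2) ^+ k :> R.
  by apply: lerXn2r; rewrite ?nnegrE // mulr_ge0 // exprn_ge0.
have h3 : (5 / 4 * n%:R ^+ 2) ^+ k <= ((5 * expR 1 / 4) ^+ k * n%:R ^+ k) * (k`!)%:R :> R.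
  have -> : (5 / 4 * n%:R ^+ 2) ^+ k = ((5 / 4) ^+ k * n%:R ^+ k) * n%:R ^+ k :> R.
    by rewrite exprMn -exprM mulnC exprM expr2 exprMn mulrA.
  have -> : (5 * expR 1 / 4) ^+ k * n%:R ^+ k * (k`!)%:R
           = ((5 / 4) ^+ k * n%:R ^+ k) * (expR 1 ^+ k * (k`!)%:R) :> R.
    rewrite (_ : 5 * expR 1 / 4 = 5 / 4 * expR 1); last by rewrite mulrAC.
    rewrite exprMn.
    set A := (5 / 4) ^+ k. set B := expR 1 ^+ k. set C := n%:R ^+ k. set D := (k`!)%:R.
    by rewrite -!mulrA; congr (_ * _); rewrite mulrCA.
  apply: ler_wpM2l; last exact: fact_bound.
  by rewrite mulr_ge0 // exprn_ge0.
have := le_trans h1 (le_trans h2 h3).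
by rewrite ler_pM2r // ltr0n fact_gt0.
Qed.

Lemma e_le4 (R : realType) : expR 1 <= 4 :> R.
Proof.
have h : expR (1 / 2) <= 2 :> R.
  have h1 : 1 / 2 <= expR (- (1 / 2)) :> R.
    apply: le_trans (expR_ge1Dx _); lra.
  rewrite expRN in h1.
  have p : 0 < expR (1 / 2) :> R by exact: expR_gt0.
  rewrite -(ler_pM2r p) mulVf ?gt_eqF // in h1.
  lra.
have -> : expR 1 = expR (1 / 2) ^+ 2 :> R.
  by rewrite -expRM_natl; congr expR; field.
have p : 0 <= expR (1 / 2) :> R by exact: expR_ge0.
have -> : 4 = 2 ^+ 2 :> R by rewrite expr2; lra.
by apply: lerXn2r; rewrite ?nnegrE.
Qed.

Lemma K_le_expc (R : realType) : 5 * expR 1 / 4 <= expR (3 / (2 * expR 1) + 1) :> R.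
Proof.
set E := expR 1 : R.
have E0 : 0 < E by exact: expR_gt0.
have E4 : E <= 4 := e_le4 R.
rewrite expRD -/E.
have h := expR_ge1Dx (3 / (2 * E)).
apply: (le_trans (y := (1 + 3 / (2 * E)) * E)); last first.
  by apply: ler_wpM2r => //; exact: ltW.
have -> : (1 + 3 / (2 * E)) * E = E + 3 / 2 by field; rewrite gt_eqF.
lra.
Qed.

Lemma pow_part (R : realType) (n : nat) (s : R) : (2 <= n)%N -> 0 <= s ->
  n%:R ^+ n <= n%:R `^ (n%:R + 2 * s) * Num.max (2 `^ (- n%:R)) ((2 * n%:R) `^ (- s)).
Proof.
move=> n2 s0.
have n0 : (0 : R) < n%:R by rewrite ltr0n; lia.
have m0 : (0 : R) < (2 * n%:R) `^ s by rewrite powR_gt0 // mulr_gt0.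
apply: (le_trans (y := n%:R `^ (n%:R + 2 * s) * (2 * n%:R) `^ (- s))); last first.
  apply: ler_wpM2l; first exact: powR_ge0.
  by rewrite le_max lexx orbT.
have E : (n%:R + 2 * s == 0) ==> (n%:R != 0 :> R) by apply/implyP => _; rewrite gt_eqF.
rewrite (powRD E).
rewrite (powR_mulrn _ (ltW n0)) -mulrA.
rewrite -[X in X <= _]mulr1; apply: ler_wpM2l; first by rewrite exprn_ge0 // ltW.
rewrite powRN powRrM.
have -> : n%:R `^ 2 = n%:R ^+ 2 :> R by rewrite -(powR_mulrn _ (ltW n0)).
rewrite ler_pdivlMr // mul1r; apply: ge0_ler_powR => //; rewrite ?nnegrE.
- by rewrite mulr_ge0 // ltW.
- by rewrite exprn_ge0 // ltW.
rewrite expr2 ler_pM2r // (ler_nat R 2 n); exact: n2.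
Qed.

Lemma K_ge1 (R : realType) : 1 <= 5 * expR 1 / 4 :> R.
Proof. have := expR_ge1Dx (1 : R); lra. Qed.

Lemma Kn_mono (R : realType) k :
  (5 * expR 1 / 4) ^+ k * (k.+1)%:R ^+ k <= (5 * expR 1 / 4) ^+ k.+1 * (k.+1)%:R ^+ k.+1 :> R.
Proof.
have K1 := K_ge1 R.
apply: ler_pM.
- by rewrite exprn_ge0 // (le_trans _ K1).
- by rewrite exprn_ge0.
- exact: ler_weXn2l.
- by apply: ler_weXn2l => //; rewrite ler1n.
Qed.

Lemma main_bound (R : realType) d k : (4 * d <= k.+1 * k.+1)%N ->
  (p d k.+1)%:R <= (5 * expR 1 / 4) ^+ k * (k.+1)%:R ^+ k :> R.
Proof.
move=> h; apply: le_trans (binom_real R h).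
by rewrite ler_nat; apply: p_le.
Qed.

Unset Implicit Arguments.
Local Open Scope classical_set_scope.
Local Open Scope ring_scope.

Theorem proposition2 (R : realType) :
  (forall d n : nat, (0 < d)%N -> (0 < n)%N -> (d%:R <= (n%:R ^+ 2) / 4 :> R) ->
     let c : R := 3 / (2 * expR 1) + 1 in
     (p d n)%:R < 4 * expR (c * n%:R)
                  * n%:R `^ (n%:R + 2 * Num.sqrt d%:R)
                  * Num.max (2 `^ (- n%:R)) ((2 * n%:R) `^ (- Num.sqrt d%:R)))
  /\
  (forall dn : nat -> nat, (forall n, (0 < dn n)%N) ->
     (fun n : nat => (dn n)%:R / (n%:R ^+ 2) : R) @ \oo --> 0 ->
     exists f : nat -> R,
       (fun n : nat => f n / n%:R) @ \oo --> 0 /\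
       \forall n \near \oo, (p (dn n) n)%:R <= n%:R `^ (n%:R + f n)).
Proof.
split.
  move=> d n d0 n0 hd; cbv zeta; set c := 3 / (2 * expR 1) + 1.
  have h4 : (4 * d <= n * n)%N.
    rewrite -(ler_nat R) natrM natrM -expr2.
    by rewrite ler_pdivlMr // mulrC in hd.
  have n2 : (2 <= n)%N by nia.
  case: n n0 hd h4 n2 => [//|k] _ hd h4 n2.
  set K := 5 * expR 1 / 4 : R.
  have K0 : 0 <= K by apply: le_trans (K_ge1 R); lra.
  apply: (le_lt_trans (main_bound R h4)).
  apply: (le_lt_trans (Kn_mono R k)) => //.
  have nn0 : (0 : R) < (k.+1)%:R ^+ k.+1 by rewrite exprn_gt0.
  have Kn0 : (0 : R) < K ^+ k.+1 by rewrite exprn_gt0 // (lt_le_trans ltr01 (K_ge1 R)).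
  have X0 := mulr_gt0 Kn0 nn0.
  apply: (lt_le_trans (y := 4 * (K ^+ k.+1 * (k.+1)%:R ^+ k.+1))); first lra.
  have H1 : K ^+ k.+1 <= expR (c * (k.+1)%:R).
    rewrite /c expRM_natr; apply: lerXn2r; rewrite ?nnegrE ?expR_ge0 //.
    exact: K_le_expc.
  have H2 := pow_part n2 (sqrtr_ge0 (d%:R : R)).
  have H3 := ler_pM (ltW Kn0) (ltW nn0) H1 H2.
  lra.
move=> dn dn0 hcv.
exists (fun n : nat => 2 * n%:R / ln (n%:R : R)).
split.
  apply/cvgrPdist_lt => eps eps0.
  apply: filterS (nbhs_infty_ge (Num.Def.trunc (expR (2 / eps))).+1) => n hn.
  have hx : expR (2 / eps) < n%:R :> R.
    apply: (lt_le_trans (truncnS_gt _)); by rewrite ler_nat.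
  have n0 : (0 : R) < n%:R by apply: le_lt_trans hx; exact: expR_ge0.
  have hl : 2 / eps < ln (n%:R : R).
    by rewrite -ltr_expR lnK // posrE.
  have l0 : 0 < ln (n%:R : R) by apply: lt_trans hl; rewrite divr_gt0.
  rewrite sub0r normrN mulrAC mulfK ?gt_eqF //.
  rewrite ger0_norm ?divr_ge0 ?ltW //.
  by rewrite ltr_pdivrMr // mulrC -ltr_pdivrMr.
have ev : \forall n \near \oo, (4 * dn n <= n * n)%N.
  have q4 : (0 : R) < 1 / 4 by lra.
  move/cvgrPdist_lt: hcv => /(_ _ q4).
  apply: filterS2 (nbhs_infty_ge 1) => n n1.
  rewrite sub0r normrN => h.
  have n0 : (0 : R) < n%:R by rewrite ltr0n.
  rewrite ger0_norm ?divr_ge0 // in h.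
  rewrite ltr_pdivrMr ?exprn_gt0 // in h.
  rewrite -(ler_nat R) !natrM; rewrite -expr2; lra.
apply: filterS2 ev (nbhs_infty_ge 2) => n h4 n2.
case: n h4 n2 => [//|k] h4 n2.
set K := 5 * expR 1 / 4 : R.
have n0 : (0 : R) < (k.+1)%:R by rewrite ltr0n.
have l0 : 0 < ln ((k.+1)%:R : R) by apply: ln_gt0; rewrite ltr1n.
apply: (le_trans (main_bound R h4)).
apply: (le_trans (Kn_mono R k)).
have E : ((k.+1)%:R + 2 * (k.+1)%:R / ln ((k.+1)%:R : R) == 0) ==> ((k.+1)%:R != 0 :> R).
  by apply/implyP => _; rewrite gt_eqF.
rewrite (powRD E) (powR_mulrn _ (ltW n0)) mulrC.
apply: ler_wpM2l; first by rewrite exprn_ge0 // ltW.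
rewrite /powR gt_eqF // mulfVK ?gt_eqF // mulrC expRM_natr.
apply: lerXn2r; rewrite ?nnegrE ?expR_ge0 //.
have e2 := expR_ge1Dx (1 : R).
have -> : (2 : R) = 1 + 1 by lra.
rewrite expRD.
have E0 : 0 < expR 1 :> R by exact: expR_gt0.
nra.
Qed.
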